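(* Let $(X,\rho)$ be a separable metric space and let $T\colon X\to X$ be an aperiodic Borel automorphism. Then there exist a metrically universal Borel subset $\widehat X\subset X$ and a Borel measurable injective map $\Phi\colon \widehat X\to \mathcal{T}(\mathrm{UA})$ into the path space of the uniadic graph $\mathrm{UA}$ such that the adic shift $S$ is defined at every point of $\Phi(\widehat X)$ and $\Phi(Tx)=S(\Phi(x))$ for all $x\in\widehat X$.
   Context: A Borel automorphism of $X$ is an invertible map $T\colon X\to X$ such that $T$ and $T^{-1}$ are Borel measurable; it is aperiodic if it has no periodic points. $M_{\mathrm{ap}}(X,T)$ denotes the set of $T$-invariant aperiodic Borel probability measures on $X$ (i.e. invariant probability measures giving measure zero to the set of $T$-periodic points). A Borel set $\widehat X\subset X$ is metrically universal if $\mu(\widehat X)=1$ for every $\mu\in M_{\mathrm{ap}}(X,T)$. Graded graphs and adic shift: a graded graph has vertex set $\bigsqcup_{n\ge0}V_n$ with $V_0$ a single vertex, each $V_n$ finite, and (possibly multiple) edges only between $V_n$ and $V_{n+1}$; an adic structure is a linear order on the set of edges entering each vertex of level $n\ge1$ from level $n-1$. The path space $\mathcal{T}(\Gamma)$ is the set of infinite paths starting at the vertex of level $0$, going through one vertex of each level (a path is a sequence of edges $e_1,e_2,\dots$ with $e_n$ from level $n-1$ to level $n$), with the product Borel structure. Two paths are tail-equivalent if they coincide from some level on; on a tail-equivalence class the adic order is: for distinct paths $p,q$ coinciding after level $n$, with $n$ the largest level where they differ, $p<q$ iff the edge of $p$ entering its vertex at level $n$ is smaller than that of $q$ (they enter the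 same vertex, recursively compared; equivalently, compare lexicographically from the top differing level). The adic shift $S$ maps a path to its immediate successor in the adic order, defined on paths that are not maximal. The uniadic graph $\mathrm{UA}$: $V_0$ is a single vertex; given $V_n$, set $V_{n+1}=V_n^2\sqcup \mathrm{copy}(V_n)$. Each $w=(u,v)\in V_n^2$ receives two edges, from $u$ and from $v$, with the edge from $v$ declared greater than the edge from $u$; each $w\in\mathrm{copy}(V_n)$, a copy of $u\in V_n$, receives a single edge from $u$. *)

(* Defs.v *)
From HB Require Import structures.
From mathcomp Require Import all_boot all_order all_algebra.
From mathcomp Require Import all_classical all_reals all_analysis.
Set Implicit Arguments. Unset Strict Implicit. Unset Printing Implicit Defensive.
Import Order.TTheory GRing.Theory Num.Theory.
Local Open Scope classical_set_scope.
Local Open Scope ring_scope.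

Definition borel_set {X : topologicalType} (A : set X) : Prop :=
  <<s [set U : set X | open U] >> A.

Definition borel_fun {X : topologicalType} (f : X -> X) : Prop :=
  forall A : set X, borel_set A -> borel_set (f @^-1` A).

Definition separable_space (X : topologicalType) : Prop :=
  exists S : set X, countable S /\ dense S.

Definition borel_automorphism {X : topologicalType} (T : X -> X) : Prop :=
  borel_fun T /\
  exists Tinv : X -> X, [/\ cancel T Tinv, cancel Tinv T & borel_fun Tinv].

Definition periodic_points {X : Type} (T : X -> X) : set X :=
  [set x | exists n : nat, (0 < n)%N /\ iter n T x = x].

Definition aperiodic {X : Type} (T : X -> X) : Prop :=
  periodic_points T = set0.

(** Borel probability measures on X, written out as in MathComp-Analysis
    ([measure] + [probability]) but relative to the Borel sets of X.  (The
    library's [probability] requires a pointed carrier, which would exclude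
    the empty space; hence this literal unfolding.) *)
Definition borel_probability {R : realType} {X : topologicalType}
    (mu : set X -> \bar R) : Prop :=
  [/\ mu set0 = 0%E,
      (forall A, borel_set A -> (0 <= mu A)%E),
      (forall F : nat -> set X, (forall i, borel_set (F i)) ->
          trivIset setT F ->
          (fun n => (\sum_(0 <= i < n) mu (F i))%E) @ \oo --> mu (\bigcup_n F n)) &
      mu setT = 1%E].

Definition invariant_aperiodic_prob {R : realType} {X : topologicalType}
    (T : X -> X) (mu : set X -> \bar R) : Prop :=
  [/\ borel_probability mu,
      (forall A : set X, borel_set A -> mu (T @^-1` A) = mu A) &
      mu (periodic_points T) = 0%E].

Definition metrically_universal {R : realType} {X : topologicalType}
    (T : X -> X) (Xh : set X) : Prop :=
  forall mu : set X -> \bar R,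
    invariant_aperiodic_prob T mu -> mu Xh = 1%E.

Fixpoint UAV (n : nat) : Type :=
  match n with
  | 0 => unit
  | n'.+1 => ((UAV n' * UAV n') + UAV n')%type
  end.

(** Edges from level n to level n+1:
    [inl ((u,v), false)] is the edge from u into (u,v),
    [inl ((u,v), true)]  is the edge from v into (u,v),
    [inr u]              is the unique edge from u into copy(u). *)
Definition UAE (n : nat) : Type := (((UAV n * UAV n) * bool) + UAV n)%type.

Definition UA_src {n : nat} (e : UAE n) : UAV n :=
  match e with
  | inl ((u, v), b) => if b then v else u
  | inr u => u
  end.

Definition UA_tgt {n : nat} (e : UAE n) : UAV n.+1 :=
  match e with
  | inl (w, _) => inl w
  | inr u => inr u
  end.

Definition UA_edge_lt {n : nat} (e f : UAE n) : Prop :=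
  match e, f with
  | inl (w, false), inl (w', true) => w = w'
  | _, _ => False
  end.

Definition UApath : Type :=
  {p : forall n : nat, UAE n | forall n : nat, UA_src (p n.+1) = UA_tgt (p n)}.

Definition UAedge (p : UApath) (n : nat) : UAE n := proj1_sig p n.

Definition UA_cylinders : set (set UApath) :=
  [set A | exists (n : nat) (e : UAE n), A = [set p | UAedge p n = e]].

Definition UA_borel_set (A : set UApath) : Prop := <<s UA_cylinders >> A.

Definition adic_lt (p q : UApath) : Prop :=
  exists m : nat, (forall k, (m < k)%N -> UAedge p k = UAedge q k) /\
                  UA_edge_lt (UAedge p m) (UAedge q m).

Definition adic_shift_graph (p q : UApath) : Prop :=
  adic_lt p q /\ ~ (exists r, adic_lt p r /\ adic_lt r q).

Definition adic_shift_defined (p : UApath) : Prop :=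
  exists q, adic_shift_graph p q.

(* Main.v *)
Require Import Defs.
From HB Require Import structures.
From mathcomp Require Import all_boot all_order all_algebra.
From mathcomp Require Import all_classical all_reals all_analysis.
From mathcomp Require Import zify ring lra.
Set Implicit Arguments. Unset Strict Implicit. Unset Printing Implicit Defensive.
Import Order.TTheory GRing.Theory Num.Theory.
Local Open Scope classical_set_scope.

Section Borel.
Variable X : topologicalType.

Lemma bset0 : borel_set (@set0 X).
Proof. exact: sigma_algebra0. Qed.

Lemma bsetC (A : set X) : borel_set A -> borel_set (~` A).
Proof. by move=> hA; rewrite -setTD; apply: sigma_algebraCD. Qed.

Lemma bsetT : borel_set (@setT X).
Proof. by rewrite -setC0; apply: bsetC; exact: bset0. Qed.

Lemma bset_bigcup (F : nat -> set X) : (forall i, borel_set (F i)) ->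
  borel_set (\bigcup_i F i).
Proof. exact: sigma_algebra_bigcup. Qed.

Lemma bset_bigcap (F : nat -> set X) : (forall i, borel_set (F i)) ->
  borel_set (\bigcap_i F i).
Proof.
move=> hF; rewrite -[X in borel_set X]setCK setC_bigcap.
by apply: bsetC; apply: bset_bigcup => i; apply: bsetC.
Qed.

Lemma bsetU (A B : set X) : borel_set A -> borel_set B -> borel_set (A `|` B).
Proof.
move=> hA hB.
have -> : A `|` B = \bigcup_i (if i == 0%N then A else B).
  apply/seteqP; split => x.
    by case=> h; [exists 0%N | exists 1%N].
  by case=> -[|i] _ /=; [left|right].
by apply: bset_bigcup => -[|i].
Qed.

Lemma bsetI (A B : set X) : borel_set A -> borel_set B -> borel_set (A `&` B).
Proof.
move=> hA hB; rewrite -[X in borel_set X]setCK setCI.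
by apply: bsetC; apply: bsetU; apply: bsetC.
Qed.

Lemma bsetD (A B : set X) : borel_set A -> borel_set B -> borel_set (A `\` B).
Proof. by move=> hA hB; apply: bsetI => //; apply: bsetC. Qed.

Lemma bset_open (A : set X) : open A -> borel_set A.
Proof. by move=> hA; apply: sub_sigma_algebra. Qed.

Lemma bset_ext (A B : set X) : A = B -> borel_set A -> borel_set B.
Proof. by move=> ->. Qed.

Definition meas {A : Type} (f : X -> A) :=
  forall P : A -> Prop, borel_set [set x | P (f x)].

Lemma meas_set (P : X -> Prop) : (forall Q : bool -> Prop, borel_set [set x | Q `[< P x >]]) ->
  meas (fun x => `[< P x >]).
Proof. by []. Qed.

Lemma meas_comp {A B : Type} (F : A -> B) (f : X -> A) : meas f -> meas (fun x => F (f x)).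
Proof. by move=> hf P; apply: (hf (fun a => P (F a))). Qed.

Lemma meas_const {A : Type} (a : A) : meas (fun _ : X => a).
Proof.
move=> P; case: (pselect (P a)) => h.
  by apply: bset_ext bsetT; apply/seteqP; split.
by apply: bset_ext bset0; apply/seteqP; split.
Qed.

Lemma meas_bind {A : Type} (h : X -> nat) (g : nat -> X -> A) :
  meas h -> (forall k, meas (g k)) -> meas (fun x => g (h x) x).
Proof.
move=> hh hg P.
have -> : [set x | P (g (h x) x)] =
   \bigcup_k ([set x | h x = k] `&` [set x | P (g k x)]).
  apply/seteqP; split => x /=.
    by move=> Hx; exists (h x) => //.
  by case=> k _ [/= -> ].
by apply: bset_bigcup => k; apply: bsetI; [exact: (hh (fun a => a = k)) | apply: hg].
Qed.

Lemma meas_bind_en {A B : Type} (en : nat -> A) (hen : forall a, exists k, en k = a)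
  (h : X -> A) (g : A -> X -> B) :
  meas h -> (forall a, meas (g a)) -> meas (fun x => g (h x) x).
Proof.
move=> hh hg P.
have -> : [set x | P (g (h x) x)] =
   \bigcup_k ([set x | h x = en k] `&` [set x | P (g (en k) x)]).
  apply/seteqP; split => x /=.
    by move=> Hx; have [k hk] := hen (h x); exists k => //=; rewrite hk.
  by case=> k _ [/= -> ].
by apply: bset_bigcup => k; apply: bsetI; [exact: (hh (fun a => a = en k)) | apply: hg].
Qed.

Lemma meas_pair {A B : Type} (en : nat -> A) (hen : forall a, exists k, en k = a)
  (f : X -> A) (g : X -> B) : meas f -> meas g -> meas (fun x => (f x, g x)).
Proof.
move=> hf hg; apply: (meas_bind_en hen (g := fun a x => (a, g x))) => // a.
exact: (meas_comp (fun b => (a, b))).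
Qed.

Lemma meas_pair_nat {B : Type} (f : X -> nat) (g : X -> B) :
  meas f -> meas g -> meas (fun x => (f x, g x)).
Proof. by apply: (meas_pair (en := id)) => a; exists a. Qed.

Lemma meas_borel (f : X -> bool) : meas f -> borel_set [set x | f x].
Proof. by move=> hf; apply: (hf (fun b => b = true)). Qed.

Lemma borel_meas (A : set X) : borel_set A -> meas (fun x => `[< A x >]).
Proof.
move=> hA P.
have -> : [set x | P `[< A x >]] =
   (A `&` [set _ | P true]) `|` (~` A `&` [set _ | P false]).
  apply/seteqP; split => x /=.
    by case: (pselect (A x)) => h; [left; rewrite asboolT in H | right; rewrite asboolF in H] => //.
  by case=> -[h1 h2]; [rewrite asboolT | rewrite asboolF].
by apply: bsetU; apply: bsetI => //; try apply: bsetC => //;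
   apply: meas_const (fun _ => _).
Qed.

End Borel.

Definition least (P : nat -> bool) : nat :=
  match pselect (exists k, P k) with left h => ex_minn h | right _ => 0%N end.

Lemma leastP (P : nat -> bool) : (exists k, P k) -> P (least P) /\ forall k, P k -> (least P <= k)%N.
Proof.
move=> h; rewrite /least; case: pselect => // h'.
by case: ex_minnP => m Pm Hm; split.
Qed.

Lemma least_le (P : nat -> bool) k : P k -> (least P <= k)%N.
Proof. by move=> Pk; apply: (leastP (ex_intro _ k Pk)).2. Qed.

Lemma least_true (P : nat -> bool) k : P k -> P (least P).
Proof. by move=> Pk; apply: (leastP (ex_intro _ k Pk)).1. Qed.

Lemma least_eq (P : nat -> bool) m : P m -> (forall k, (k < m)%N -> ~~ P k) -> least P = m.
Proof.
move=> Pm Hm; have [h1 h2] := leastP (ex_intro _ m Pm).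
apply/eqP; rewrite eqn_leq h2 //=; rewrite leqNgt; apply/negP => lt.
by move: (Hm _ lt); rewrite h1.
Qed.

Lemma least_none (P : nat -> bool) : ~ (exists k, P k) -> least P = 0%N.
Proof. by move=> h; rewrite /least; case: pselect. Qed.

Section Meas2.
Variable X : topologicalType.

Lemma meas_nat (f : X -> nat) : (forall m, borel_set [set x | f x = m]) -> meas f.
Proof.
move=> hf P.
have -> : [set x | P (f x)] = \bigcup_m ([set x | f x = m] `&` [set _ | P m]).
  apply/seteqP; split => x /=; first by move=> h; exists (f x).
  by case=> m _ [/= -> ].
by apply: bset_bigcup => m; apply: bsetI => //; exact: (meas_const m (fun a => P a)).
Qed.

Lemma bset_fin_bigcap (m : nat) (F : nat -> set X) : (forall k, (k < m)%N -> borel_set (F k)) ->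
  borel_set [set x | forall k, (k < m)%N -> F k x].
Proof.
move=> hF.
have -> : [set x | forall k, (k < m)%N -> F k x] =
   \bigcap_k (if (k < m)%N then F k else setT).
  apply/seteqP; split => x /=.
    by move=> h k _; case: ifP => // /h.
  by move=> h k km; move: (h k I); rewrite km.
by apply: bset_bigcap => k; case: ifP => [/hF|_] //; exact: bsetT.
Qed.

Lemma bset_ex_nat (F : nat -> set X) : (forall k, borel_set (F k)) ->
  borel_set [set x | exists k, F k x].
Proof.
move=> hF; have -> : [set x | exists k, F k x] = \bigcup_k F k.
  by apply/seteqP; split => x /=; [case=> k h; exists k | case=> k _ h; exists k].
exact: bset_bigcup.
Qed.

Lemma meas_least (Q : nat -> X -> bool) : (forall k, borel_set [set x | Q k x]) ->
  meas (fun x => least (Q^~ x)).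
Proof.
move=> hQ; apply: meas_nat => m.
have -> : [set x | least (Q^~ x) = m] =
  ([set x | Q m x] `&` [set x | forall k, (k < m)%N -> ~ Q k x]) `|`
  ([set x | ~ exists k, Q k x] `&` [set _ | m = 0%N]).
  apply/seteqP; split => x /=.
    case: (pselect (exists k, Q k x)) => h.
      have [h1 h2] := leastP h => <-; left; split => // k lk qk.
      by move: (h2 _ qk); rewrite leqNgt lk.
    by move=> <-; right; split => //; rewrite least_none.
  case=> [[h1 h2]|[h1 /= ->]]; last by rewrite least_none.
  by apply: least_eq => // k /h2 /negP.
apply: bsetU; apply: bsetI.
- by [].
- by apply: (bset_fin_bigcap (F := fun k => ~` [set x | Q k x])) => k _; apply: bsetC.
- by apply: bsetC; apply: (bset_ex_nat (F := fun k => [set x | Q k x])).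
- exact: (meas_const m (fun a => a = 0%N)).
Qed.

End Meas2.

Section Shift.
Variable X : topologicalType.
Variables (T Tinv : X -> X).
Hypotheses (TK : cancel T Tinv) (TiK : cancel Tinv T).
Hypotheses (bT : borel_fun T) (bTi : borel_fun Tinv).

Definition sh (j : int) (x : X) : X :=
  match j with Posz n => iter n T x | Negz n => iter n.+1 Tinv x end.

Lemma sh0 x : sh 0 x = x. Proof. by []. Qed.

Lemma shS j x : sh (j + 1)%R x = T (sh j x).
Proof.
case: j => n.
  have -> : (Posz n + 1 = Posz n.+1)%R by lia.
  by [].
case: n => [|n]; first by rewrite /= TiK.
have -> : (Negz n.+1 + 1 = Negz n)%R by rewrite !NegzE; lia.
by rewrite /= TiK.
Qed.

Lemma shP j x : sh (j - 1)%R x = Tinv (sh j x).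
Proof.
have := shS (j - 1)%R x; rewrite GRing.subrK => ->.
by rewrite TK.
Qed.

Lemma sh_add i j x : sh i (sh j x) = sh (i + j)%R x.
Proof.
case: i => n.
  elim: n => [|n IH]; first by rewrite add0r.
  have -> : (Posz n.+1 + j = (Posz n + j) + 1)%R by lia.
  rewrite shS -IH; have -> : Posz n.+1 = (Posz n + 1)%R by lia.
  by rewrite shS.
elim: n => [|n IH].
  have -> : (Negz 0 + j = j - 1)%R by rewrite NegzE; lia.
  by rewrite shP.
have -> : (Negz n.+1 + j = (Negz n + j) - 1)%R by rewrite !NegzE; lia.
rewrite shP -IH; have -> : Negz n.+1 = (Negz n - 1)%R by rewrite !NegzE; lia.
by rewrite shP.
Qed.

Lemma sh_inv j x : sh (- j)%R (sh j x) = x.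
Proof. by rewrite sh_add addNr. Qed.

Lemma sh_inv' j x : sh j (sh (- j)%R x) = x.
Proof. by rewrite sh_add addrN. Qed.

Lemma sh1 x : sh 1 x = T x. Proof. by []. Qed.
Lemma shN1 x : sh (-1)%R x = Tinv x. Proof. by []. Qed.

Lemma borel_fun_iter (f : X -> X) n : borel_fun f -> borel_fun (iter n f).
Proof.
move=> hf; elim: n => [|n IH] A hA /=; first by [].
exact: (IH (f @^-1` A) (hf A hA)).
Qed.

Lemma sh_borel j (A : set X) : borel_set A -> borel_set (sh j @^-1` A).
Proof. by case: j => n; apply: borel_fun_iter. Qed.

Lemma meas_sh {B : Type} (f : X -> B) j : meas f -> meas (fun x => f (sh j x)).
Proof. by move=> hf P; apply: (sh_borel j (hf P)). Qed.

Lemma meas_sh_dep {B : Type} (f : X -> B) (h : X -> int) : meas f -> meas h ->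
  meas (fun x => f (sh (h x) x)).
Proof.
move=> hf hh.
pose en (k : nat) : int := if odd k then Negz k./2 else Posz k./2.
have hen : forall a, exists k, en k = a.
  case=> n; [exists n.*2 | exists n.*2.+1]; rewrite /en ?odd_double ?doubleK //=.
  by rewrite odd_double /= uphalf_double.
apply: (meas_bind_en hen (g := fun a x => f (sh a x))) => // a.
exact: meas_sh.
Qed.

End Shift.

Section Metric.
Variables (R : realType) (X : metricType R).

Lemma mball_open (c : X) (r : R) : open [set y | (mdist c y < r)%R].
Proof.
rewrite openE => y /= hy; rewrite /interior.
have e0 : (0 < r - mdist c y)%R by rewrite subr_gt0.
apply: (filterS _ (nbhsx_ballx y _ e0)) => z; rewrite ballEmdist /= => hz.
have := metric_triangle c y z; lra.
Qed.

Lemma mball_borel (c : X) (r : R) : borel_set [set y | (mdist c y < r)%R].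
Proof. apply: bset_open; exact: mball_open. Qed.

End Metric.

Section Markers.
Variables (R : realType) (X : metricType R).
Variables (T Tinv : X -> X).
Hypotheses (TK : cancel T Tinv) (TiK : cancel Tinv T).
Hypotheses (bT : borel_fun T) (bTi : borel_fun Tinv).
Hypothesis hap : forall x (n : nat), (0 < n)%N -> iter n T x <> x.
Variable s : nat -> X.
Hypothesis sdense : forall (x : X) (e : R), (0 < e)%R -> exists i, (mdist x (s i) < e)%R.

Local Notation sh := (sh T Tinv).

Definition rad (m : nat) : R := (m.+1%:R)^-1%R.

Lemma rad_gt0 m : (0 < rad m)%R.
Proof. by rewrite /rad invr_gt0. Qed.

Definition Bc (n m i : nat) : set X :=
  [set y | (mdist (s i) y < rad m)%R /\
           forall j : nat, (1 <= j <= n)%N -> ~ (mdist (s i) (sh j y) < rad m)%R].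


Lemma Bc_borel n m i : borel_set (Bc n m i).
Proof.
have -> : Bc n m i = [set y | (mdist (s i) y < rad m)%R] `&`
  [set y | forall j, (j < n.+1)%N ->
     (if (1 <= j)%N then sh j @^-1` ~` [set y | (mdist (s i) y < rad m)%R] else setT) y].
  apply/seteqP; split => y /= [h1 h2]; split => // j.
    by move=> jn; case: ifP => // j1; apply: h2; rewrite j1.
  by case/andP => j1 jn; move: (h2 j jn); rewrite j1.
apply: bsetI; first exact: mball_borel.
apply: bset_fin_bigcap => j _.
case: ifP => _; last exact: bsetT.
by apply: sh_borel => //; apply: bsetC; apply: mball_borel.
Qed.

Lemma Bc_sep n m i y j : Bc n m i y -> (1 <= j <= n)%N -> ~ Bc n m i (sh j y).
Proof. by move=> [_ h] hj [h1 _]; apply: (h j hj). Qed.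

Lemma archi_rad (d : R) : (0 < d)%R -> exists m, (3 * rad m < d)%R.
Proof.
move=> d0.
have h0 : (0 <= 3 / d)%R by rewrite divr_ge0 // ltW.
have := archi_boundP h0; set b := Num.Def.archi_bound _ => hb.
exists b; rewrite /rad.
have hb1 : (3 / d < b.+1%:R)%R by apply: (lt_le_trans hb); rewrite ler_nat.
have pb : (0 < b.+1%:R :> R)%R by [].
rewrite -[(3 * _)%R]/(3 / b.+1%:R)%R ltr_pdivrMr //.
by move: hb1; rewrite ltr_pdivrMr // mulrC.
Qed.

Lemma Bc_cover n x : exists m i, Bc n m i x.
Proof.
have : exists m, forall j : nat, (1 <= j <= n)%N -> (3 * rad m < mdist x (sh j x))%R.
  elim: n => [|n [m hm]]; first by exists 0%N => j; rewrite leqn0 andbC; case: eqP => // ->.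
  have dpos : (0 < mdist x (sh n.+1 x))%R.
    rewrite mdist_gt0; apply/eqP => h.
    by apply: (hap (n := n.+1) (x := x)) => //; rewrite -[RHS]h.
  have [m' hm'] := archi_rad dpos.
  exists (maxn m m') => j /andP[j1]; rewrite leq_eqVlt => /orP[/eqP ->|jn].
    apply: le_lt_trans hm'; rewrite ler_pM2l // /rad lef_pV2 ?posrE //.
    by rewrite ler_nat ltnS leq_maxr.
  have := hm j; rewrite j1 -ltnS jn => /(_ isT); apply: le_lt_trans.
  rewrite ler_pM2l // /rad lef_pV2 ?posrE //.
  by rewrite ler_nat ltnS leq_maxl.
case=> m hm.
have [i hi] := sdense x (rad_gt0 m).
exists m, i; split; first by rewrite metric_sym.
move=> j hj hc; have := hm j hj.
have := metric_triangle x (s i) (sh j x).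
have := rad_gt0 m; lra.
Qed.

Definition Bk (n k : nat) : set X :=
  match unpickle k with Some (m, i) => Bc n m i | None => set0 end.

Lemma Bk_borel n k : borel_set (Bk n k).
Proof. by rewrite /Bk; case: unpickle => [[m i]|]; [apply: Bc_borel | apply: bset0]. Qed.

Lemma Bk_cover n x : exists k, Bk n k x.
Proof.
have [m [i h]] := Bc_cover n x.
by exists (pickle (m, i)); rewrite /Bk pickleK.
Qed.

Lemma Bk_sep n k y j : Bk n k y -> (1 <= j <= n)%N -> ~ Bk n k (sh j y).
Proof.
rewrite /Bk; case: unpickle => [[m i]|] //; exact: Bc_sep.
Qed.

Definition near (n : nat) (S : set X) : set X :=
  [set y | exists j : nat, (j <= n)%N /\ (S (sh j y) \/ S (sh (- j%:Z)%R y))].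

Lemma near_borel n S : borel_set S -> borel_set (near n S).
Proof.
move=> hS.
have -> : near n S = [set y | exists j, (if (j <= n)%N then
   sh j @^-1` S `|` sh (- j%:Z)%R @^-1` S else set0) y].
  apply/seteqP; split => y /= [j h]; exists j.
    by case: h => -> h.
  by move: h; case: ifP.
apply: (bset_ex_nat (F := fun j => if (j <= n)%N then
   sh j @^-1` S `|` sh (- j%:Z)%R @^-1` S else set0)) => j.
by case: ifP => _; [apply: bsetU; apply: sh_borel | apply: bset0].
Qed.

Fixpoint Ag (n k : nat) : set X :=
  match k with
  | 0 => set0
  | k'.+1 => Ag n k' `|` (Bk n k' `\` near n (Ag n k'))
  end.

Definition Aset (n : nat) : set X := \bigcup_k Ag n k.

Lemma Ag_borel n k : borel_set (Ag n k).
Proof.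
elim: k => [|k IH] /=; first exact: bset0.
by apply: bsetU => //; apply: bsetD; [apply: Bk_borel | apply: near_borel].
Qed.

Lemma Aset_borel n : borel_set (Aset n).
Proof. by apply: bset_bigcup => k; apply: Ag_borel. Qed.

Lemma Ag_mono n k k' : (k <= k')%N -> Ag n k `<=` Ag n k'.
Proof.
move=> /subnK <-; elim: (k' - k)%N => [|d IH] //= y h.
by left; apply: IH.
Qed.

Lemma Ag_sep n k y j : Ag n k y -> (1 <= j <= n)%N -> ~ Ag n k (sh j y).
Proof.
elim: k y => [|k IH] y //=.
case=> [hy|[hy ny]] hj [hz|[hz nz]].
- exact: IH hy hj hz.
- apply: nz; exists j; split; first by case/andP: hj.
  by right; rewrite sh_inv.
- apply: ny; exists j; split; first by case/andP: hj.
  by left.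
- exact: Bk_sep hy hj hz.
Qed.

Lemma Aset_sep n y j : Aset n y -> (1 <= j <= n)%N -> ~ Aset n (sh j y).
Proof.
move=> [k _ hk] hj [k' _ hk'].
apply: (Ag_sep (k := maxn k k') _ hj).
  by apply: Ag_mono hk; rewrite leq_maxl.
by apply: Ag_mono hk'; rewrite leq_maxr.
Qed.

Lemma Aset_cover n y : exists j : int, (- n%:Z <= j <= n%:Z)%R /\ Aset n (sh j y).
Proof.
have [k hk] := Bk_cover n y.
case: (pselect (near n (Ag n k) y)) => [[j [jn [h|h]]]|h].
- by exists j; split; [lia | exists k].
- by exists (- j%:Z)%R; split; [lia | exists k].
- by exists 0%R; split; [lia | exists k.+1 => //=; right].
Qed.

End Markers.

Lemma intnat (z : int) : (0 <= z)%R -> exists j : nat, z = Posz j.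
Proof. by case: z => n // _; exists n. Qed.

Section Markers2.
Variables (R : realType) (X : metricType R).
Variables (T Tinv : X -> X).
Hypotheses (TK : cancel T Tinv) (TiK : cancel Tinv T).
Hypotheses (bT : borel_fun T) (bTi : borel_fun Tinv).
Hypothesis hap : forall x (n : nat), (0 < n)%N -> iter n T x <> x.
Variable s : nat -> X.
Hypothesis sdense : forall (x : X) (e : R), (0 < e)%R -> exists i, (mdist x (s i) < e)%R.

Local Notation sh := (sh T Tinv).
Local Notation A := (Aset T Tinv s).

Lemma shE i j x : i = j -> sh i x = sh j x. Proof. by move=> ->. Qed.
Lemma shA i j x : sh i (sh j x) = sh (i + j)%R x. Proof. exact: sh_add. Qed.
Lemma shT (P : set X) i j x : i = j -> P (sh i x) -> P (sh j x). Proof. by move=> ->. Qed.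
Ltac shtac := match goal with |- ?P (sh ?i ?x) -> ?P (sh ?j ?x) => apply: (@shT P i j x); lia end.

Fixpoint G (k : nat) : nat :=
  match k with 0 => 0%N | k'.+1 => (G k' + 2 * (G k' + k'.+1))%N end.

Definition nsep (k : nat) : nat := (G k + k + 1)%N.

Fixpoint M (k : nat) : set X :=
  match k with
  | 0 => setT
  | k'.+1 => [set x | M k' x /\ exists j : nat, A (nsep k') (sh (- j%:Z)%R x) /\
                 forall i : nat, (1 <= i <= j)%N -> ~ M k' (sh (- i%:Z)%R x)]
  end.

Lemma M_borel k : borel_set (M k).
Proof.
elim: k => [|k IH] /=; first exact: bsetT.
have -> : [set x | M k x /\ exists j : nat, A (nsep k) (sh (- j%:Z)%R x) /\
                 forall i : nat, (1 <= i <= j)%N -> ~ M k (sh (- i%:Z)%R x)] =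
  M k `&` [set x | exists j, (sh (- j%:Z)%R @^-1` A (nsep k) `&`
       [set x | forall i, (i < j.+1)%N -> (if (1 <= i)%N then sh (- i%:Z)%R @^-1` ~` M k else setT) x]) x].
  apply/seteqP; split => x /= [h1 [j [h2 h3]]]; split => //; exists j; split => //.
    by move=> i; case: ifP => // i1 ij; apply: h3; rewrite i1.
  by move=> i /andP[i1 ij]; move: (h3 i ij); rewrite i1.
apply: bsetI => //.
apply: (bset_ex_nat (F := fun j => (sh (- j%:Z)%R @^-1` A (nsep k) `&`
       [set x | forall i, (i < j.+1)%N -> (if (1 <= i)%N then sh (- i%:Z)%R @^-1` ~` M k else setT) x]))) => j.
apply: bsetI.
  by apply: sh_borel => //; apply: Aset_borel.
apply: bset_fin_bigcap => i _; case: ifP => _; last exact: bsetT.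
by apply: sh_borel => //; apply: bsetC.
Qed.

Lemma M_sub k : M k.+1 `<=` M k.
Proof. by move=> x [] . Qed.

Lemma M_sub' k k' : (k <= k')%N -> M k' `<=` M k.
Proof.
move=> /subnK <-; elim: (k' - k)%N => [|d IH] //= x h.
by apply: IH; case: h.
Qed.

Lemma M_gap k x : exists j : nat, (j <= G k)%N /\ M k (sh (- j%:Z)%R x).
Proof.
elim: k x => [|k IH] x; first by exists 0%N.
pose n := nsep k.
have [t [tb ha]] := Aset_cover Tinv hap sdense n (sh (- (G k + n)%:Z)%R x).
set a := sh t _ in ha.
have [e0 [e0b he0]] : exists e0 : nat, (e0 <= G k)%N /\ M k (sh e0 a).
  have [j [jb hj]] := IH (sh (G k) a).
  exists (G k - j)%N; split; first by rewrite leq_subr.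
  move: hj; rewrite shA. apply: (@shT (M k) (- j%:Z + G k)%R (G k - j)%N a); lia.
pose P := fun e : nat => `[< M k (sh e a) >].
have Pe0 : P e0 by apply/asboolP.
set e := least P.
have Pe : M k (sh e a) by apply/asboolP; apply: least_true Pe0.
have ee0 : (e <= e0)%N by apply: least_le.
have hp : M k.+1 (sh e a).
  split => //; exists e; split.
    by rewrite shA addNr.
  move=> i /andP[i1 ie] hi.
  have : (e <= e - i)%N.
    apply: least_le; apply/asboolP; move: hi; rewrite shA; shtac.
  lia.
have [j hj] : exists j : nat, (Posz (G k) + Posz n - t - Posz e)%R = Posz j.
  by apply: intnat; lia.
exists j; split.
  clearbody e P a; rewrite /= /n /nsep in hj tb *; lia.
move: hp; rewrite /a !shA; shtac.
Qed.

Lemma M_fwd k a : exists e : nat, (e <= G k)%N /\ M k (sh e a).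
Proof.
have [j [jb hj]] := M_gap k (sh (G k) a).
exists (G k - j)%N; split; first by rewrite leq_subr.
by move: hj; rewrite shA; shtac.
Qed.

Lemma M_wit k x e : (forall i : nat, (1 <= i <= e)%N -> ~ M k (sh (- i%:Z)%R x)) -> (e <= G k)%N.
Proof.
move=> h; have [e0 [e0b he0]] := M_fwd k (sh (- e%:Z)%R x).
rewrite leqNgt; apply/negP => eG.
apply: (h (e - e0)%N); first lia.
by move: he0; rewrite shA; shtac.
Qed.

Lemma M_sep k x (j : nat) : M k.+1 x -> M k.+1 (sh j x) -> (1 <= j <= k.+1)%N -> False.
Proof.
move=> [hx [e [ha he]]] [hy [f [hb hf]]] hj.
have eG := M_wit he.
case: (leqP j f) => jf.
  apply: (hf j); first lia.
  by rewrite shA addNr.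
apply: (Aset_sep TK TiK (n := nsep k) (j := (j - f + e)%N) ha).
  rewrite /nsep; lia.
by move: hb; rewrite !shA; shtac.
Qed.

Definition D : set X := \bigcap_k M k.

Lemma D_borel : borel_set D.
Proof. by apply: bset_bigcap => k; apply: M_borel. Qed.

Lemma D_sep x (j : int) : D x -> D (sh j x) -> j = 0%R.
Proof.
move=> hx hy.
wlog jpos : x j hx hy / (0 <= j)%R.
  move=> W; case: (lerP 0 j) => hj; first exact: W hx hy hj.
  have hx' : D (sh (- j)%R (sh j x)) by rewrite shA addNr.
  have := W (sh j x) (- j)%R hy hx'; lia.
have [m hm] := intnat jpos; subst j.
clear jpos; case: m hy => [|m] hy //.
exfalso; apply: (M_sep (k := m) (hx m.+1 I) (hy m.+1 I)); lia.
Qed.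

End Markers2.

Section Blocks.
Variable X : topologicalType.
Variables (T Tinv : X -> X).
Hypotheses (TK : cancel T Tinv) (TiK : cancel Tinv T).
Local Notation sh := (sh T Tinv).

Lemma shA' i j x : sh i (sh j x) = sh (i + j)%R x. Proof. exact: sh_add. Qed.
Lemma shE' i j x : i = j -> sh i x = sh j x. Proof. by move=> ->. Qed.

Variable mu : X -> nat.
Variable Xh : set X.
Hypothesis Xh_sh : forall x j, Xh x -> Xh (sh j x).
Hypothesis Hback : forall x n, Xh x -> exists a : nat, (n <= mu (sh (- Posz a)%R x))%N.
Hypothesis Hfwd : forall x n, Xh x -> exists b : nat, (n <= mu (sh (Posz b.+1) x))%N.
Hypothesis Hcon : forall z n (j : nat), Xh z -> mu z = n -> mu (sh (Posz j) z) = n -> (1 <= j)%N ->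
  exists i : nat, (0 < i < j)%N /\ (n <= mu (sh (Posz i) z))%N.

Definition ba n x := least (fun a => n <= mu (sh (- Posz a)%R x))%N.
Definition bb n x := (least (fun b => n <= mu (sh (Posz b.+1) x))%N).+1.
Definition st n x := sh (- Posz (ba n x))%R x.
Definition nx n x := sh (Posz (bb n x)) x.

Lemma a_spec n x : Xh x -> (n <= mu (st n x))%N /\ forall i : nat, (i < ba n x)%N -> (mu (sh (- Posz i)%R x) < n)%N.
Proof.
move=> hx; have [a0 h0] := Hback n hx.
have [h1 h2] := @leastP (fun a : nat => (n <= mu (sh (- Posz a)%R x))%N) (ex_intro _ a0 h0).
split => // i hi; rewrite ltnNge; apply/negP => h.
by move: (h2 _ h); rewrite leqNgt hi.
Qed.

Lemma b_spec n x : Xh x -> (n <= mu (nx n x))%N /\ forall i : nat, (1 <= i < bb n x)%N -> (mu (sh (Posz i) x) < n)%N.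
Proof.
move=> hx; have [b0 h0] := Hfwd n hx.
have [h1 h2] := @leastP (fun b : nat => (n <= mu (sh (Posz b.+1) x))%N) (ex_intro _ b0 h0).
split => // -[|i] hi //; rewrite ltnNge; apply/negP => h.
by move: (h2 _ h); rewrite leqNgt; case/andP: hi => _; rewrite /bb ltnS => ->.
Qed.

Lemma a_char n x a0 : (n <= mu (sh (- Posz a0)%R x))%N ->
  (forall i : nat, (i < a0)%N -> (mu (sh (- Posz i)%R x) < n)%N) -> ba n x = a0.
Proof.
move=> h1 h2; apply: least_eq => // k /h2; by rewrite ltnNge.
Qed.

Lemma b_char n x b0 : (1 <= b0)%N -> (n <= mu (sh (Posz b0) x))%N ->
  (forall i : nat, (1 <= i < b0)%N -> (mu (sh (Posz i) x) < n)%N) -> bb n x = b0.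
Proof.
case: b0 => // b0 _ h1 h2; rewrite /bb; congr S.
apply: least_eq => // k kb; rewrite -ltnNge; apply: h2; lia.
Qed.

Lemma a0_start n y : (n <= mu y)%N -> ba n y = 0%N.
Proof. by move=> h; apply: a_char. Qed.

Lemma st_start n y : (n <= mu y)%N -> st n y = y.
Proof. by move=> h; rewrite /st a0_start. Qed.

Lemma b1_start n x : (n <= mu (sh 1 x))%N -> bb n x = 1%N.
Proof. by move=> h; apply: b_char => // i; lia. Qed.

Lemma nx_start n x : (n <= mu (sh 1 x))%N -> nx n x = sh 1 x.
Proof. by move=> h; rewrite /nx b1_start. Qed.

Lemma a_T n x : Xh x -> (mu (sh 1 x) < n)%N -> ba n (sh 1 x) = (ba n x).+1.
Proof.
move=> hx h1; have [s1 s2] := a_spec n hx.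
apply: a_char.
  by rewrite shA'; move: s1; rewrite /st; congr (n <= mu _)%N; apply: shE'; lia.
move=> [|i] hi; first by [].
rewrite shA'; have := s2 i hi; congr (mu _ < n)%N; apply: shE'; lia.
Qed.

Lemma st_T n x : Xh x -> (mu (sh 1 x) < n)%N -> st n (sh 1 x) = st n x.
Proof.
move=> hx h1; rewrite /st a_T // shA'; apply: shE'; lia.
Qed.

Lemma b_T n x : Xh x -> (mu (sh 1 x) < n)%N -> bb n x = (bb n (sh 1 x)).+1.
Proof.
move=> hx h1; have hx1 := Xh_sh 1 hx.
have [s1 s2] := b_spec n hx1.
apply: b_char => //.
  by move: s1; rewrite /nx shA'; congr (n <= mu _)%N; apply: shE'; lia.
move=> [|[|i]] hi //.
have := s2 i.+1 ltac:(lia); rewrite shA'; congr (mu _ < n)%N; apply: shE'; lia.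
Qed.

Lemma nx_T n x : Xh x -> (mu (sh 1 x) < n)%N -> nx n (sh 1 x) = nx n x.
Proof.
move=> hx h1; rewrite /nx (b_T hx h1) shA'; apply: shE'; lia.
Qed.

Lemma nx_st n x : Xh x -> nx n x = sh (Posz (ba n x + bb n x)) (st n x).
Proof. by move=> hx; rewrite /nx /st shA'; apply: shE'; lia. Qed.

Lemma notRL n x : Xh x -> mu (st n x) = n -> mu (nx n x) = n -> False.
Proof.
move=> hx hR hL.
have [a1 a2] := a_spec n hx; have [b1 b2] := b_spec n hx.
have hb : (1 <= bb n x)%N by [].
have hst : Xh (st n x) by apply: Xh_sh.
have hL' : mu (sh (Posz (ba n x + bb n x)) (st n x)) = n by rewrite -nx_st.
have [i [hi hmu]] := Hcon hst hR hL' ltac:(lia).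
move: hmu; rewrite /st shA' => hmu.
case: (leqP i (ba n x)) => hia.
  have := a2 (ba n x - i)%N ltac:(lia).
  have e : sh (Posz i - Posz (ba n x))%R x = sh (- Posz (ba n x - i))%R x by apply: shE'; lia.
  rewrite e in hmu.
  by rewrite ltnNge hmu.
have := b2 (i - ba n x)%N ltac:(lia).
have e : sh (Posz i - Posz (ba n x))%R x = sh (Posz (i - ba n x))%R x by apply: shE'; lia.
rewrite e in hmu.
by rewrite ltnNge hmu.
Qed.

Definition Ef n (Vn : X -> UAV n) (x : X) : UAE n :=
  if mu (st n x) == n then inl ((Vn (sh (-1)%R (st n x)), Vn x), true)
  else if mu (nx n x) == n then inl ((Vn x, Vn (nx n x)), false)
  else inr (Vn x).

Fixpoint Vf (n : nat) : X -> UAV n :=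
  match n with 0 => fun _ => tt | n'.+1 => fun x => UA_tgt (Ef (Vf n') x) end.

Definition Eg n x := Ef (Vf n) x.

Lemma src_Ef n (Vn : X -> UAV n) x : UA_src (Ef Vn x) = Vn x.
Proof. by rewrite /Ef; case: ifP => _ //; case: ifP. Qed.

Definition Phi (x : X) : UApath :=
  @exist (forall n : nat, UAE n) (fun p => forall n : nat, UA_src (p n.+1) = UA_tgt (p n))
    (fun n => Eg n x) (fun n => src_Ef (Vf n.+1) x).

Lemma PhiE x n : UAedge (Phi x) n = Eg n x. Proof. by []. Qed.

Lemma sh1K x : sh (-1)%R (sh 1 x) = x.
Proof. by rewrite shA' addNr. Qed.
Lemma shK1 x : sh 1 (sh (-1)%R x) = x.
Proof. by rewrite shA' addrN. Qed.

Lemma E_inv n x : Xh x -> (mu (sh 1 x) < n)%N -> Vf n (sh 1 x) = Vf n x ->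
  Eg n (sh 1 x) = Eg n x.
Proof.
move=> hx h1 hV; rewrite /Eg /Ef (st_T hx h1) (nx_T hx h1) hV.
by [].
Qed.

Lemma V_inv n x : Xh x -> (mu (sh 1 x) < n)%N -> Vf n (sh 1 x) = Vf n x.
Proof.
elim: n x => [|n IH] x hx h1 //=.
rewrite ltnS leq_eqVlt in h1; case/orP: h1 => [/eqP h1|h1].
- have hn1 : (n <= mu (sh 1 x))%N by rewrite h1.
  have hnx := nx_start hn1.
  have hst := st_start hn1.
  rewrite /Ef hst h1 eqxx sh1K /=.
  case: ifP => [/eqP hR|_].
    by exfalso; apply: (notRL hx hR); rewrite hnx.
  by rewrite hnx h1 eqxx.
- by rewrite -/(Eg n (sh 1 x)) -/(Eg n x) (E_inv hx h1 (IH x hx h1)).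
Qed.

Definition fk k (e : UAE k) : bool :=
  match e with inl (_, b) => ~~ b | inr _ => false end.
Definition tk k (e : UAE k) : bool :=
  match e with inl (_, b) => b | inr _ => false end.

Lemma edge_lt_ft k (e f : UAE k) : UA_edge_lt e f -> fk e /\ tk f.
Proof.
by case: e => [[w [|]]|u]; case: f => [[w' [|]]|u'].
Qed.

Lemma ft_excl k (e : UAE k) : fk e -> tk e -> False.
Proof. by case: e => [[w [|]]|u]. Qed.

Lemma succ_lemma (p q : UApath) m w :
  UAedge p m = inl (w, false) -> UAedge q m = inl (w, true) ->
  (forall k, (m < k)%N -> UAedge p k = UAedge q k) ->
  (forall k, (k < m)%N -> ~~ fk (UAedge p k)) ->
  (forall k, (k < m)%N -> ~~ tk (UAedge q k)) ->
  adic_shift_graph p q.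
Proof.
move=> hp hq hpq hpf hqt; split.
  by exists m; split => //; rewrite hp hq.
case=> r [[m1 [h1 l1]] [m2 [h2 l2]]].
have [f1 t1] := edge_lt_ft l1; have [f2 t2] := edge_lt_ft l2.
case: (ltnP m1 m) => hm1; first by move: (hpf _ hm1); rewrite f1.
case: (ltnP m2 m) => hm2; first by move: (hqt _ hm2); rewrite t2.
case: (ltngtP m1 m2) => hm12.
- have e1 := h1 _ hm12.
  have e2 : UAedge p m2 = UAedge q m2 by apply: hpq; lia.
  by apply: (ft_excl f2); rewrite -e1 e2.
- have e1 := h2 _ hm12.
  have e2 : UAedge p m1 = UAedge q m1 by apply: hpq; lia.
  by apply: (ft_excl f1); rewrite e2 -e1.
- by subst m2; apply: (ft_excl f2 t1).
Qed.


Lemma shift_ok x : Xh x -> adic_shift_graph (Phi x) (Phi (sh 1 x)).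
Proof.
move=> hx; set m := mu (sh 1 x).
have hm : (m <= mu (sh 1 x))%N by [].
apply: (@succ_lemma _ _ m (Vf m x, Vf m (sh 1 x))).
- rewrite PhiE /Eg /Ef.
  case: ifP => [/eqP hR|_].
    by exfalso; apply: (notRL hx hR); rewrite nx_start.
  by rewrite nx_start // eqxx.
- by rewrite PhiE /Eg /Ef st_start // eqxx sh1K.
- move=> k mk; rewrite !PhiE; apply/esym/E_inv => //.
  by apply: V_inv.
- move=> k km; rewrite PhiE /Eg /Ef; case: ifP => // _.
  rewrite nx_start; last by lia.
  by rewrite -/m (_ : (m == k) = false) //; apply/eqP; lia.
- move=> k km; rewrite PhiE /Eg /Ef st_start; last by lia.
  rewrite -/m (_ : (m == k) = false) //; last by apply/eqP; lia.
  by case: ifP.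
Qed.

Lemma shift_ok' x : Xh x -> adic_shift_defined (Phi x).
Proof. by move=> hx; exists (Phi (sh 1 x)); apply: shift_ok. Qed.

Fixpoint hv (n : nat) : UAV n -> nat :=
  match n return UAV n -> nat with
  | 0 => fun _ => 1%N
  | n'.+1 => fun v => match v with inl (u, w) => (hv u + hv w)%N | inr u => hv u end
  end.

Definition rk k (e : UAE k) : nat :=
  match e with inl ((u, _), true) => hv u | _ => 0%N end.

Definition rank (p : UApath) (n : nat) : nat := \sum_(k < n) rk (UAedge p k).

Lemma S1 n x : Xh x -> mu (st n x) <> n -> ba n.+1 x = ba n x.
Proof.
move=> hx hne; have [a1 a2] := a_spec n hx.
apply: a_char; first by rewrite /st in a1 hne; lia.
by move=> i /a2; lia.
Qed.

Lemma S3 n x : Xh x -> mu (nx n x) <> n -> bb n.+1 x = bb n x.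
Proof.
move=> hx hne; have [b1 b2] := b_spec n hx.
apply: b_char => //; first by rewrite /nx in b1 hne; lia.
by move=> i /b2; lia.
Qed.

Lemma S2 n x : Xh x -> mu (st n x) = n ->
  ba n.+1 x = (ba n x + (ba n.+1 (sh (-1)%R (st n x))).+1)%N.
Proof.
move=> hx he; set y := sh (-1)%R (st n x).
have hy : Xh y by apply: Xh_sh; apply: Xh_sh.
have [a1 a2] := a_spec n hx; have [c1 c2] := a_spec n.+1 hy.
apply: a_char.
  by move: c1; rewrite /st /y !shA'; congr (_ <= mu _)%N; apply: shE'; lia.
move=> i hi.
case: (ltngtP i (ba n x)) => h.
- by have := a2 _ h; lia.
- have := c2 (i - (ba n x).+1)%N ltac:(lia).
  rewrite /y /st !shA'.
  rewrite [sh _ x](@shE' _ (- Posz i)%R x); last by lia.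
  lia.
- by subst i; rewrite -/(st n x) he.
Qed.

Lemma S4 n x : Xh x -> mu (nx n x) = n ->
  bb n.+1 x = (bb n x + bb n.+1 (nx n x))%N.
Proof.
move=> hx he; set z := nx n x.
have hz : Xh z by apply: Xh_sh.
have [b1 b2] := b_spec n hx; have [c1 c2] := b_spec n.+1 hz.
apply: b_char; first by rewrite addn_gt0 /bb.
  by move: c1; rewrite /nx /z /nx !shA'; congr (_ <= mu _)%N; apply: shE'; lia.
move=> i hi.
case: (ltngtP i (bb n x)) => h.
- by have := b2 i ltac:(lia); lia.
- have := c2 (i - bb n x)%N ltac:(lia).
  rewrite /z /nx !shA'.
  rewrite [sh _ x](@shE' _ (Posz i) x); last by lia.
  lia.
- by subst i; rewrite -/(nx n x) he.
Qed.

Lemma ba0 x : Xh x -> ba 0 x = 0%N.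
Proof. by move=> hx; apply: a0_start. Qed.
Lemma bb0 x : Xh x -> bb 0 x = 1%N.
Proof. by move=> hx; apply: b1_start. Qed.

Lemma rank_ok n x : Xh x -> rank (Phi x) n = ba n x /\ hv (Vf n x) = (ba n x + bb n x)%N.
Proof.
elim: n x => [|n IH] x hx.
  by rewrite /rank big_ord0 ba0 // bb0.
have [r1 h1] := IH x hx.
rewrite /rank big_ord_recr /= -/(rank (Phi x) n) r1 -/(Eg n x) /Eg /Ef.
case: ifP => [/eqP hR|hR].
  set y := sh (-1)%R (st n x).
  have hy : Xh y by apply: Xh_sh; apply: Xh_sh.
  have hnxy : nx n y = st n x.
    by rewrite nx_start /y shK1 //; have [] := a_spec n hx.
  have hRy : mu (st n y) <> n by move=> h; apply: (notRL hy h); rewrite hnxy.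
  have hL : mu (nx n x) <> n by move=> h; apply: (notRL hx hR h).
  have [r2 h2] := IH y hy.
  rewrite (S2 hx hR) (S1 hy hRy) (S3 hx hL) /= h2 h1.
  have -> : bb n y = 1%N by apply: b1_start; rewrite /y shK1; have [] := a_spec n hx.
  split; lia.
case: ifP => [/eqP hL|hL].
  set z := nx n x.
  have hz : Xh z by apply: Xh_sh.
  have hstz : st n z = z by apply: st_start; rewrite /z hL.
  have hLz : mu (nx n z) <> n by move=> h; apply: (notRL hz _ h); rewrite hstz.
  have [r2 h2] := IH z hz.
  have hR' : mu (st n x) <> n by move=> h; move/eqP: h; rewrite hR.
  rewrite (S1 hx hR') (S4 hx hL) (S3 hz hLz) /= h2 h1 -/z.
  rewrite (a0_start (n:=n) (y:=z)); last by rewrite /z hL.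
  split; lia.
have hR' : mu (st n x) <> n by move=> h; move/eqP: h; rewrite hR.
have hL' : mu (nx n x) <> n by move=> h; move/eqP: h; rewrite hL.
by rewrite (S1 hx hR') (S3 hx hL') /= h1 addn0.
Qed.

Lemma R_exists n0 x : Xh x -> (n0 <= mu (st n0 x))%N /\ st (mu (st n0 x)) x = st n0 x.
Proof.
move=> hx; have [a1 a2] := a_spec n0 hx; split => //.
have e : ba (mu (st n0 x)) x = ba n0 x.
  by apply: a_char => // i /a2; lia.
by rewrite /st e.
Qed.

Lemma ba_le n x (j : nat) : (n <= mu (sh (- Posz j)%R x))%N -> (ba n x <= j)%N.
Proof. by move=> h; apply: least_le. Qed.

End Blocks.

Fixpoint enV (n : nat) : nat -> UAV n :=
  match n return nat -> UAV n with
  | 0 => fun _ => tt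
  | n'.+1 => fun k => if odd k then inr (enV n' k./2)
             else match @unpickle (nat * nat)%type k./2 with
                  | Some (i, j) => inl (enV n' i, enV n' j)
                  | None => inr (enV n' 0) end
  end.

Lemma enV_surj n (v : UAV n) : exists k, enV n k = v.
Proof.
elim: n v => [|n IH] v; first by case: v; exists 0%N.
case: v => [[u w]|u] /=.
  have [i hi] := IH u; have [j hj] := IH w.
  exists (pickle (i, j)).*2; rewrite odd_double doubleK pickleK.
  by rewrite hi hj.
have [i hi] := IH u; exists i.*2.+1.
by rewrite /= odd_double /= uphalf_double hi.
Qed.

Lemma enB_surj (b : bool) : exists k, odd k = b.
Proof. by case: b; [exists 1%N | exists 0%N]. Qed.

Lemma meas_pair_r (X : topologicalType) {A B : Type} (en : nat -> B) (hen : forall b, exists k, en k = b)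
  (f : X -> A) (g : X -> B) : meas f -> meas g -> meas (fun x => (f x, g x)).
Proof.
move=> hf hg; apply: (meas_bind_en hen (h := g) (g := fun b x => (f x, b))) => // b.
exact: (meas_comp (fun a => (a, b)) hf).
Qed.

Section MeasBlocks.
Variable X : topologicalType.
Variables (T Tinv : X -> X).
Hypotheses (bT : borel_fun T) (bTi : borel_fun Tinv).
Local Notation sh := (sh T Tinv).
Variable mu : X -> nat.
Hypothesis mmu : meas mu.

Local Notation ba := (ba T Tinv mu).
Local Notation bb := (bb T Tinv mu).
Local Notation st := (st T Tinv mu).
Local Notation nx := (nx T Tinv mu).
Local Notation Vf := (Vf T Tinv mu).
Local Notation Ef := (Ef T Tinv mu).
Local Notation Phi := (Phi T Tinv mu).

Lemma meas_ba n : meas (ba n).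
Proof.
apply: (meas_least (Q := fun a x => n <= mu (sh (- Posz a)%R x))%N) => a.
exact: (meas_sh bT bTi (- Posz a)%R mmu (fun m => n <= m)%N).
Qed.

Lemma meas_bb n : meas (bb n).
Proof.
apply: (meas_comp S (f := fun x => least (fun b => n <= mu (sh (Posz b.+1) x))%N)).
apply: (meas_least (Q := fun b x => n <= mu (sh (Posz b.+1) x))%N) => b.
exact: (meas_sh bT bTi (Posz b.+1) mmu (fun m => n <= m)%N).
Qed.


Lemma meas_st {B : Type} n (f : X -> B) : meas f -> meas (fun x => f (st n x)).
Proof.
move=> hf; apply: (meas_sh_dep bT bTi (h := fun x => (- Posz (ba n x))%R)) => //.
exact: (meas_comp (fun a : nat => (- Posz a)%R) (meas_ba n)).
Qed.

Lemma meas_nx {B : Type} n (f : X -> B) : meas f -> meas (fun x => f (nx n x)).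
Proof.
move=> hf; apply: (meas_sh_dep bT bTi (h := fun x => Posz (bb n x))) => //.
exact: (meas_comp (fun a : nat => Posz a) (meas_bb n)).
Qed.

Definition Ffun n (t : bool * bool * UAV n * UAV n * UAV n) : UAE n :=
  match t with (b1, b2, u, v, w) =>
    if b1 then inl ((u, v), true) else if b2 then inl ((v, w), false) else inr v end.

Lemma meas_Ef n (Vn : X -> UAV n) : meas Vn -> meas (fun x => Ef Vn x).
Proof.
move=> hV.
have h1 : meas (fun x => mu (st n x) == n) by apply: (meas_comp (fun m => m == n)); apply: meas_st.
have h2 : meas (fun x => mu (nx n x) == n) by apply: (meas_comp (fun m => m == n)); apply: meas_nx.
have h3 : meas (fun x => Vn (sh (-1)%R (st n x))).
  by apply: (@meas_st _ n (fun y => Vn (sh (-1)%R y))); apply: meas_sh.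
have h5 : meas (fun x => Vn (nx n x)) by apply: meas_nx.
have hp : meas (fun x => (mu (st n x) == n, mu (nx n x) == n, Vn (sh (-1)%R (st n x)), Vn x, Vn (nx n x))).
  apply: (meas_pair_r (@enV_surj n)) => //.
  apply: (meas_pair_r (@enV_surj n)) => //.
  apply: (meas_pair_r (@enV_surj n)) => //.
  by apply: (meas_pair_r enB_surj).
exact: (meas_comp (@Ffun n) hp).
Qed.

Lemma meas_Vf n : meas (Vf n).
Proof.
elim: n => [|n IH] /=; first exact: meas_const.
exact: (meas_comp (@UA_tgt n) (meas_Ef IH)).
Qed.

Lemma meas_Phi (Xh : set X) : borel_set Xh ->
  forall B, UA_borel_set B -> borel_set (Xh `&` Phi @^-1` B).
Proof.
move=> hXh B hB.
pose C := [set B : set UApath | borel_set (Xh `&` Phi @^-1` B)].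
suff : UA_borel_set `<=` C by apply.
apply: smallest_sub.
  split.
  - by rewrite /C /= preimage_set0 setI0; apply: bset0.
  - move=> A hA; rewrite /C /= setTD preimage_setC.
    have -> : Xh `&` ~` (Phi @^-1` A) = Xh `\` (Xh `&` Phi @^-1` A).
      by rewrite setDIr setDv set0U.
    exact: bsetD.
  - move=> F hF; rewrite /C /= preimage_bigcup setI_bigcupr.
    by apply: bset_bigcup.
move=> A [n [e ->]].
rewrite /C /=; apply: bsetI => //.
have := meas_Ef (@meas_Vf n) (fun a => a = e).
by apply: bset_ext; apply/seteqP; split => x.
Qed.

End MeasBlocks.

Lemma sum_bits_lt N (b : nat -> bool) : (\sum_(0 <= e < N) b e * 2 ^ e < 2 ^ N)%N.
Proof.
elim: N => [|N IH]; first by rewrite big_geq.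
rewrite big_nat_recr //= expnS; case: (b N) => /=; lia.
Qed.

Lemma sum_bits_inj N (b b' : nat -> bool) :
  (\sum_(0 <= e < N) b e * 2 ^ e = \sum_(0 <= e < N) b' e * 2 ^ e)%N -> forall e, (e < N)%N -> b e = b' e.
Proof.
elim: N => [|N IH] // h e he.
move: h; rewrite !big_nat_recr //=.
have l1 := sum_bits_lt N b; have l2 := sum_bits_lt N b'.
have H : forall s s' : nat, (s < 2 ^ N)%N -> (s' < 2 ^ N)%N ->
   (s + b N * 2 ^ N = s' + b' N * 2 ^ N)%N -> b N = b' N /\ s = s'.
  move=> s0 s1 h0 h1; case: (b N) (b' N) => [] [] /= hh; split => //; lia.
move=> h; have [eqN eqs] := H _ _ l1 l2 h.
rewrite ltnS leq_eqVlt in he; case/orP: he => [/eqP -> //|he].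
by apply: IH.
Qed.

Section Mu.
Variables (R : realType) (X : metricType R).
Variables (T Tinv : X -> X).
Hypotheses (TK : cancel T Tinv) (TiK : cancel Tinv T).
Hypotheses (bT : borel_fun T) (bTi : borel_fun Tinv).
Hypothesis hap : forall x (n : nat), (0 < n)%N -> iter n T x <> x.
Variable s : nat -> X.
Hypothesis sdense : forall (x : X) (e : R), (0 < e)%R -> exists i, (mdist x (s i) < e)%R.

Local Notation sh := (sh T Tinv).
Local Notation M := (M T Tinv s).
Local Notation D := (D T Tinv s).
Local Notation rad := (rad R).
Let Mgap := M_gap TK TiK hap sdense.
Let Mfwd := M_fwd TK TiK hap sdense.
Let Dsep := D_sep TK TiK hap sdense.

Lemma shA2 i j x : sh i (sh j x) = sh (i + j)%R x. Proof. exact: sh_add. Qed.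
Lemma shE2 i j x : i = j -> sh i x = sh j x. Proof. by move=> ->. Qed.

Definition U (i : nat) : set X :=
  match @unpickle (nat * nat)%type i with
  | Some (m, c) => [set y | (mdist (s c) y < rad m)%R]
  | None => set0 end.

Lemma U_borel i : borel_set (U i).
Proof. rewrite /U; case: unpickle => [[m c]|]; [apply: mball_borel | apply: bset0]. Qed.

Lemma U_sep x y : x <> y -> exists i, U i x /\ ~ U i y.
Proof.
move=> xy.
have d0 : (0 < mdist x y)%R by rewrite mdist_gt0; apply/eqP.
have [m hm] := archi_rad d0.
have [c hc] := sdense x (rad_gt0 R m).
exists (pickle (m, c)); rewrite /U pickleK; split => /=.
  by rewrite metric_sym.
move=> hy; have := metric_triangle x (s c) y.
have := rad_gt0 R m; lra.
Qed.

Definition N (k : nat) : nat := ((G k.+1).+1 * k)%N.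
Definition Dk (k : nat) : nat := (2 ^ N k)%N.
Fixpoint L (k : nat) : nat :=
  match k with 0 => 0%N | k'.+1 => (L k' + Dk k' * (G k'.+1).+1)%N end.

Definition bit (k e : nat) (z : X) : bool := `[< U (e %% k) (sh (Posz (e %/ k)) z) >].
Definition code (k : nat) (z : X) : nat := (\sum_(0 <= e < N k) bit k e z * 2 ^ e)%N.

Definition stage (z : X) : nat := least (fun k => ~~ `[< M k.+1 z >]).
Definition dd (k : nat) (z : X) : nat := least (fun e => `[< M k.+1 (sh (- Posz e)%R z) >]).

Definition mu (z : X) : nat :=
  let k := stage z in (L k + Dk k * dd k z + code k z)%N.

Lemma Dk_gt0 k : (0 < Dk k)%N.
Proof. by rewrite /Dk expn_gt0. Qed.

Lemma L_lt k : (L k < L k.+1)%N.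
Proof. by rewrite /= -{1}[L k]addn0 ltn_add2l muln_gt0 Dk_gt0. Qed.

Lemma L_mono k k' : (k <= k')%N -> (L k <= L k')%N.
Proof.
move=> /subnK <-; elim: (k' - k)%N => [|d IH] //=.
by apply: leq_trans IH _; rewrite leq_addr.
Qed.

Lemma L_ge k : (k <= L k)%N.
Proof. by elim: k => [|k IH] //; apply: leq_ltn_trans IH (L_lt k). Qed.

Lemma L_lt' k k' : (k < k')%N -> (L k.+1 <= L k')%N.
Proof. exact: L_mono. Qed.

Lemma code_lt k z : (code k z < Dk k)%N.
Proof. exact: sum_bits_lt. Qed.

Lemma stage_spec z : ~ D z -> M (stage z) z /\ ~ M (stage z).+1 z.
Proof.
move=> hz.
have [k hk] : exists k, ~ M k z by apply/existsNP => h; apply: hz => k _; apply: h.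
case: k hk => [|k] hk; first by exfalso; apply: hk.
have hP : (fun k => ~~ `[< M k.+1 z >]) k by apply/negP => /asboolP.
have [h1 h2] := @leastP (fun k => ~~ `[< M k.+1 z >]) (ex_intro _ k hP).
split; last by move=> h; move/negP: h1; apply; apply/asboolP.
rewrite /stage; case: (least _) h2 => [|j] h2 //.
apply: contrapT => h; have := h2 j; rewrite ltnn => hh.
suff : false by [].
by apply: hh; apply/negP => /asboolP.
Qed.

Lemma stage_ge z K : ~ D z -> M K z -> (K <= stage z)%N.
Proof.
move=> hz hK; rewrite leqNgt; apply/negP => lt.
have [_ h] := stage_spec hz; apply: h.
exact: (M_sub' lt hK).
Qed.

Lemma dd_spec k z : (dd k z <= G k.+1)%N /\ M k.+1 (sh (- Posz (dd k z))%R z) /\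
  forall i : nat, (i < dd k z)%N -> ~ M k.+1 (sh (- Posz i)%R z).
Proof.
have [j [jb hj]] := Mgap k.+1 z.
have hP : (fun e => `[< M k.+1 (sh (- Posz e)%R z) >]) j by apply/asboolP.
have [h1 h2] := @leastP (fun e => `[< M k.+1 (sh (- Posz e)%R z) >]) (ex_intro _ j hP).
split; first by apply: leq_trans (h2 _ hP) jb.
split; first by apply/asboolP.
move=> i hi hMi; have : (dd k z <= i)%N by apply: h2; apply/asboolP.
by rewrite leqNgt hi.
Qed.

Lemma mu_range z : ~ D z -> (L (stage z) <= mu z < L (stage z).+1)%N.
Proof.
move=> hz; rewrite /mu /=.
have [h1 _] := dd_spec (stage z) z.
have := code_lt (stage z) z.
set k := stage z; set d := dd k z; set c := code k z; set Dk' := Dk k => hc.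
apply/andP; split; first by rewrite -addnA leq_addr.
rewrite -addnA ltn_add2l.
apply: (@leq_trans (Dk' * d + Dk')); first by rewrite ltn_add2l.
by rewrite -mulnSr leq_mul2l ltnS h1 orbT.
Qed.

Lemma mu_ge z K : ~ D z -> M K z -> (L K <= mu z)%N.
Proof.
move=> hz hK; have := mu_range hz; case/andP => h _.
exact: leq_trans (L_mono (stage_ge hz hK)) h.
Qed.

Lemma stage_of_mu z k : ~ D z -> (L k <= mu z < L k.+1)%N -> stage z = k.
Proof.
move=> hz /andP[h1 h2]; have /andP[h3 h4] := mu_range hz.
case: (ltngtP (stage z) k) => // h.
- have := L_lt' h; lia.
- have := L_lt' h; lia.
Qed.

Lemma mu_decode z z' : ~ D z -> ~ D z' -> mu z = mu z' ->
  stage z = stage z' /\ code (stage z) z = code (stage z) z'.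
Proof.
move=> hz hz' he.
have hs : stage z' = stage z by apply: stage_of_mu => //; rewrite -he; apply: mu_range.
split => //.
move: he; rewrite /mu /= hs.
have := code_lt (stage z) z; have := code_lt (stage z) z'.
set k := stage z; set a := code k z; set b := code k z'.
move=> hb ha he.
have : (Dk k * dd k z + a) %% Dk k = (Dk k * dd k z' + b) %% Dk k.
  by congr modn; lia.
by rewrite !(mulnC (Dk k)) !modnMDl !modn_small.
Qed.

Lemma bits_decode z z' k (o i : nat) : code k z = code k z' -> (o <= G k.+1)%N -> (i < k)%N ->
  (U i (sh (Posz o) z) <-> U i (sh (Posz o) z')).
Proof.
move=> hc ho hi.
have he := sum_bits_inj hc (e := (o * k + i)%N).
have hlt : (o * k + i < N k)%N.
  rewrite /N; apply: (@leq_trans (o * k + k)); first by rewrite ltn_add2l.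
  nia.
move: (he hlt); rewrite /bit.
have hk : (0 < k)%N by lia.
rewrite modnMDl modn_small // divnMDl // divn_small // addn0.
by move=> h; split => hu; [move: h; rewrite asboolT // => /esym/asboolP | move: h; rewrite (asboolT hu) => /asboolP].
Qed.

End Mu.

Section Good.
Variables (R : realType) (X : metricType R).
Variables (T Tinv : X -> X).
Hypotheses (TK : cancel T Tinv) (TiK : cancel Tinv T).
Hypotheses (bT : borel_fun T) (bTi : borel_fun Tinv).
Hypothesis hap : forall x (n : nat), (0 < n)%N -> iter n T x <> x.
Variable s : nat -> X.
Hypothesis sdense : forall (x : X) (e : R), (0 < e)%R -> exists i, (mdist x (s i) < e)%R.

Local Notation sh := (sh T Tinv).
Local Notation M := (M T Tinv s).
Local Notation D := (D T Tinv s).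
Local Notation mu := (mu T Tinv s).
Local Notation stage := (stage T Tinv s).
Local Notation dd := (dd T Tinv s).
Local Notation code := (code T Tinv s).

Lemma shA3 i j x : sh i (sh j x) = sh (i + j)%R x. Proof. exact: sh_add. Qed.
Lemma shTr (P : set X) i j x : i = j -> P (sh i x) -> P (sh j x). Proof. by move=> ->. Qed.
Ltac shtac2 := match goal with |- ?P (sh ?i ?x) -> ?P (sh ?j ?x) => apply: (@shTr P i j x); lia end.

Definition Xh : set X :=
  [set x | forall n : nat, ~ D (sh (Posz n) x) /\ ~ D (sh (- Posz n)%R x)].

Lemma Xh_all x : Xh x -> forall j : int, ~ D (sh j x).
Proof.
move=> hx; case=> n; first by case: (hx n).
have := (hx n.+1).2; rewrite NegzE; by [].
Qed.

Lemma Xh_sh x j : Xh x -> Xh (sh j x).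
Proof.
move=> hx n; rewrite !shA3; split; exact: Xh_all.
Qed.

Lemma Xh_nD x : Xh x -> ~ D x.
Proof. by move=> hx; have := Xh_all hx (j := 0%R). Qed.

Lemma Xh_borel : borel_set Xh.
Proof.
have -> : Xh = \bigcap_n (~` (sh (Posz n) @^-1` D) `&` ~` (sh (- Posz n)%R @^-1` D)).
  by apply/seteqP; split => x /= h n; [move=> _; apply: h | apply: h].
apply: bset_bigcap => n; apply: bsetI; apply: bsetC; apply: sh_borel => //; exact: D_borel.
Qed.

Lemma Hback x n : Xh x -> exists a : nat, (n <= mu (sh (- Posz a)%R x))%N.
Proof.
move=> hx; have [j [_ hj]] := M_gap TK TiK hap sdense n x.
exists j; apply: leq_trans (L_ge n) _.
apply: (mu_ge TK TiK hap sdense) => //.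
exact: Xh_nD (Xh_sh _ hx).
Qed.

Lemma Hfwd x n : Xh x -> exists b : nat, (n <= mu (sh (Posz b.+1) x))%N.
Proof.
move=> hx; have [e [_ he]] := M_fwd TK TiK hap sdense n (sh 1 x).
exists e; apply: leq_trans (L_ge n) _.
rewrite shA3 in he.
have -> : Posz e.+1 = (Posz e + 1)%R by lia.
apply: (mu_ge TK TiK hap sdense) => //.
exact: Xh_nD (Xh_sh _ hx).
Qed.

Lemma Hcon z n (j : nat) : Xh z -> mu z = n -> mu (sh (Posz j) z) = n -> (1 <= j)%N ->
  exists i : nat, (0 < i < j)%N /\ (n <= mu (sh (Posz i) z))%N.
Proof.
move=> hz h1 h2 hj.
have nz := Xh_nD hz; have nz' := Xh_nD (Xh_sh j hz).
have [hs hc] := mu_decode TK TiK hap sdense nz nz' (etrans h1 (esym h2)).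
set k := stage z in hs hc.
case: (pselect (exists i : nat, (0 < i <= j)%N /\ M k.+1 (sh (Posz i) z))) => [[i [hi hM]]|hno].
  have hij : i != j.
    apply/eqP => eij; subst i.
    by have [_ ] := stage_spec nz'; rewrite -hs; apply.
  exists i; split; first lia.
  have := mu_range TK TiK hap sdense nz; rewrite -/k h1 => /andP[_ hlt].
  have := mu_ge TK TiK hap sdense (Xh_nD (Xh_sh i hz)) hM; lia.
exfalso.
have [d1 [d2 d3]] := dd_spec TK TiK hap sdense k z.
have hdd : dd k (sh (Posz j) z) = (dd k z + j)%N.
  apply: least_eq.
    apply/asboolP; rewrite shA3.
    by move: d2; shtac2.
  move=> i hi; apply/negP => /asboolP; rewrite shA3 => hM.
  case: (ltnP i j) => hij.
    apply: hno; exists (j - i)%N; split; first lia.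
    by move: hM; shtac2.
  apply: (d3 (i - j)%N); first lia.
  by move: hM; shtac2.
have := code_lt T Tinv s k z.
have := Dk_gt0 k.
move: h1 h2; rewrite /mu /= -hs -/k hdd -hc.
nia.
Qed.

Lemma meas_mu : meas mu.
Proof.
have hst : meas stage.
  apply: (meas_least (Q := fun k z => ~~ `[< M k.+1 z >])) => k.
  have := borel_meas (M_borel bT bTi s k.+1) (fun b => ~~ b).
  by apply: bset_ext; apply/seteqP; split.
apply: (meas_bind (h := stage) (g := fun k z => (L k + Dk k * dd k z + code k z)%N)) => // k.
have hdd : meas (dd k).
  apply: (meas_least (Q := fun e z => `[< M k.+1 (sh (- Posz e)%R z) >])) => e.
  have := sh_borel bT bTi (- Posz e)%R (M_borel bT bTi s k.+1).
  by apply: bset_ext; apply/seteqP; split => z /=; [move=> h; apply/asboolP | move/asboolP].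
have hcode : meas (code k).
  rewrite /code; elim: (N k) => [|m IH].
    move=> P; apply: bset_ext (meas_const 0%N P); apply/seteqP; split => z /=; by rewrite big_geq.
  have hb : meas (fun z => bit T Tinv s k m z).
    apply: (meas_sh bT bTi (f := fun y => `[< U s (m %% k) y >])).
    exact: borel_meas (U_borel s (m %% k)).
  have hp := meas_pair_nat IH (meas_comp (fun b : bool => b * 2 ^ m)%N hb).
  move=> P; have := meas_comp (fun p : nat * nat => (p.1 + p.2)%N) hp P.
  by apply: bset_ext; apply/seteqP; split => z /=; rewrite big_nat_recr.
have := meas_pair_nat (meas_comp (fun d => (L k + Dk k * d)%N) hdd) hcode.
by move/(meas_comp (fun p : nat * nat => (p.1 + p.2)%N)).
Qed.

End Good.

Section MeasPart.
Variables (R : realType) (X : topologicalType).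
Variables (T Tinv : X -> X).
Hypotheses (TK : cancel T Tinv) (TiK : cancel Tinv T).
Hypotheses (bT : borel_fun T) (bTi : borel_fun Tinv).
Local Notation sh := (sh T Tinv).
Variable P : set X -> \bar R.
Hypothesis hP : invariant_aperiodic_prob T P.

Lemma P0 : P set0 = 0%E. Proof. by case: hP => -[h *]. Qed.
Lemma Pge0 A : borel_set A -> (0 <= P A)%E. Proof. by case: hP => -[_ h *]; apply: h. Qed.
Lemma PT : P setT = 1%E. Proof. by case: hP => -[_ _ _ h] *. Qed.

Lemma fin_add (F : nat -> set X) (n : nat) : (forall i, borel_set (F i)) -> trivIset setT F ->
  (forall i, (n <= i)%N -> F i = set0) ->
  P (\bigcup_i F i) = (\sum_(0 <= i < n) P (F i))%E.
Proof.
move=> hF htr h0.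
have [[_ _ hadd _] _ _] := hP.
have h1 := hadd F hF htr.
have h2 : (fun m => (\sum_(0 <= i < m) P (F i))%E) @ \oo --> (\sum_(0 <= i < n) P (F i))%E.
  apply: cvg_near_cst; exists n => // m /= hm.
  rewrite (big_cat_nat (leq0n n) hm) /= [X in (_ + X)%E]big1_seq ?adde0 //.
  by move=> i; rewrite mem_index_iota => /andP[_ /andP[hi _]]; rewrite h0 // P0.
exact: (cvg_unique (@ereal_hausdorff R) h1 h2).
Qed.

Lemma P_add2 (A B : set X) : borel_set A -> borel_set B -> A `&` B = set0 ->
  P (A `|` B) = (P A + P B)%E.
Proof.
move=> hA hB hAB.
pose F := fun i : nat => if i == 0%N then A else if i == 1%N then B else set0.
have -> : A `|` B = \bigcup_i F i.
  apply/seteqP; split => x /=.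
    by case=> h; [exists 0%N | exists 1%N].
  by case=> -[|[|i]] _ //=; [left|right].
rewrite (@fin_add F 2).
- by rewrite big_nat_recr //= big_nat_recr //= big_geq // add0e.
- by move=> -[|[|i]] //=; apply: bset0.
- move=> i j _ _ [x [hi hj]].
  move: hi hj; rewrite /F; case: i => [|[|i]] //=; case: j => [|[|j]] //= hi hj;
  by exfalso; move: hAB; rewrite -subset0 => /(_ x); apply; split.
- by move=> -[|[|i]].
Qed.

Lemma P_le1 A : borel_set A -> (P A <= 1)%E.
Proof.
move=> hA; have := P_add2 hA (bsetC hA) (setICr A).
rewrite setUCr PT => ->.
by rewrite leeDl // Pge0 //; apply: bsetC.
Qed.

Lemma P_invT A : borel_set A -> P (T @^-1` A) = P A.
Proof. by case: hP => _ h _; apply: h. Qed.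

Lemma P_invTi A : borel_set A -> P (Tinv @^-1` A) = P A.
Proof.
move=> hA.
have hA' : borel_set (Tinv @^-1` A) by apply: bTi.
rewrite -(P_invT hA'); congr P; apply/seteqP; split => x /=; by rewrite TK.
Qed.

Lemma P_iter (f : X -> X) n A : borel_fun f -> (forall B, borel_set B -> P (f @^-1` B) = P B) ->
  borel_set A -> P (iter n f @^-1` A) = P A.
Proof.
move=> hf hinv; elim: n A => [|n IH] A hA //=.
have := IH (f @^-1` A) (hf A hA).
rewrite hinv //.
Qed.

Lemma P_sh j A : borel_set A -> P (sh j @^-1` A) = P A.
Proof.
case: j => n hA /=.
  exact: P_iter bT P_invT hA.
exact: P_iter bTi P_invTi hA.
Qed.

Variable Dz : set X.
Hypothesis hD : borel_set Dz.
Hypothesis Dsep : forall x j, Dz x -> Dz (sh j x) -> j = 0%R.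

Definition enZ (n : nat) : int := if odd n then Negz n./2 else Posz n./2.

Lemma enZ_surj j : exists n, enZ n = j.
Proof.
case: j => n; [exists n.*2 | exists n.*2.+1]; rewrite /enZ ?odd_double ?doubleK //=.
by rewrite odd_double /= uphalf_double.
Qed.

Lemma enZ_inj : injective enZ.
Proof.
move=> a b; rewrite /enZ.
case: (boolP (odd a)) => ha; case: (boolP (odd b)) => hb //= h.
- case: h => h.
  by rewrite -(odd_double_half a) -(odd_double_half b) ha hb h.
- case: h => h.
  rewrite -(odd_double_half a) -(odd_double_half b) (negbTE ha) (negbTE hb) h.
  by [].
Qed.

Definition Xg : set X := [set x | forall n : nat, ~ Dz (sh (Posz n) x) /\ ~ Dz (sh (- Posz n)%R x)].

Lemma Xg_P1 : P Xg = 1%E.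
Proof.
pose F := fun n => sh (enZ n) @^-1` Dz.
have hF : forall n, borel_set (F n) by move=> n; apply: sh_borel.
have htr : trivIset setT F.
  move=> i j _ _ [x [hi hj]]; apply: enZ_inj.
  have := Dsep (j := (enZ j - enZ i)%R) hi.
  rewrite sh_add // subrK => /(_ hj) h; lia.
have hPF : forall n, P (F n) = P Dz by move=> n; apply: P_sh.
have hXc : ~` Xg = \bigcup_n F n.
  apply/seteqP; split => x /=.
    move=> h; have : exists n : nat, Dz (sh (Posz n) x) \/ Dz (sh (- Posz n)%R x).
      apply: contrapT => hn; apply: h => n; split => hd; apply: hn; exists n; [left|right] => //.
    case=> n [hd|hd].
      by have [m hm] := enZ_surj (Posz n); exists m => //; rewrite /F /= hm.
    by have [m hm] := enZ_surj (- Posz n)%R; exists m => //; rewrite /F /= hm.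
  case=> m _ hm h.
  move: hm; rewrite /F /=; case: (enZ m) => n /= hd.
    by case: (h n) => /(_ hd).
  by case: (h n.+1) => _ /(_ hd).
have hD0 : P Dz = 0%E.
  have hge : (0 <= P Dz)%E by apply: Pge0.
  have hfin : P Dz = (fine (P Dz))%:E.
    by rewrite fineK // ge0_fin_numE // (le_lt_trans (P_le1 hD)) // ltey.
  have hle : forall n : nat, (n%:R * fine (P Dz) <= 1)%R.
    move=> n.
    pose G := fun i => if (i < n)%N then F i else set0.
    have hG : forall i, borel_set (G i) by move=> i; rewrite /G; case: ifP => _ //; apply: bset0.
    have htrG : trivIset setT G.
      move=> i j _ _ [x [hi hj]]; move: hi hj; rewrite /G; case: ifP => // _; case: ifP => // _ hi hj.
      by apply: htr => //; exists x.
    have hs : P (\bigcup_i G i) = (n%:R * fine (P Dz))%:E.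
      rewrite (@fin_add G n hG htrG); last by move=> i hi; rewrite /G ltnNge hi.
      rewrite big_nat_cond (eq_bigr (fun=> (fine (P Dz))%:E)); last first.
        by move=> i /andP[/andP[_ hi] _]; rewrite /G hi hPF.
      by rewrite -big_nat_cond sumEFin sumr_const_nat subn0 mulr_natl.
    rewrite -lee_fin -hs; apply: P_le1; exact: bset_bigcup.
  move: hge; rewrite hfin lee_fin => hge.
  congr (_%:E); apply/eqP; rewrite eq_le hge andbT.
  rewrite leNgt; apply/negP => rpos.
  have h0 : (0 <= (fine (P Dz))^-1)%R by rewrite invr_ge0.
  have hb := archi_boundP h0.
  have := hle (Num.Def.archi_bound (fine (P Dz))^-1).
  rewrite -(ltr_pM2r rpos) mulVf ?gt_eqF // in hb.
  by rewrite leNgt hb.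
have hXc0 : P (~` Xg) = 0%E.
  have [[_ _ hadd _] _ _] := hP.
  have h1 := hadd F hF htr.
  rewrite -hXc in h1.
  have h2 : (fun m => (\sum_(0 <= i < m) P (F i))%E) @ \oo --> 0%E.
    apply: cvg_near_cst; exists 0%N => // m _ /=.
    by rewrite big1 // => i _; rewrite hPF.
  exact: (cvg_unique (@ereal_hausdorff R) h1 h2).
have hXg : borel_set Xg.
  rewrite -[Xg]setCK hXc; apply: bsetC; exact: bset_bigcup.
have := P_add2 hXg (bsetC hXg) (setICr Xg).
by rewrite setUCr PT hXc0 adde0.
Qed.

End MeasPart.

Section Final.
Variables (R : realType) (X : metricType R).
Variables (T Tinv : X -> X).
Hypotheses (TK : cancel T Tinv) (TiK : cancel Tinv T).
Hypotheses (bT : borel_fun T) (bTi : borel_fun Tinv).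
Hypothesis hap : forall x (n : nat), (0 < n)%N -> iter n T x <> x.
Variable s : nat -> X.
Hypothesis sdense : forall (x : X) (e : R), (0 < e)%R -> exists i, (mdist x (s i) < e)%R.

Local Notation sh := (sh T Tinv).
Local Notation mu := (mu T Tinv s).
Local Notation Xh := (Xh T Tinv s).
Local Notation D := (D T Tinv s).
Local Notation Phi := (Phi T Tinv mu).
Local Notation st := (st T Tinv mu).
Local Notation ba := (ba T Tinv mu).

Let XhS := Xh_sh TK TiK (s := s).
Let HB := Hback TK TiK hap sdense.
Let HF := Hfwd TK TiK hap sdense.
Let HC := Hcon TK TiK hap sdense.

Lemma shA4 i j x : sh i (sh j x) = sh (i + j)%R x. Proof. exact: sh_add. Qed.

Lemma Phi_inj x y : Xh x -> Xh y -> Phi x = Phi y -> x = y.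
Proof.
move=> hx hy hxy; apply: contrapT => nxy.
have [i [hUx hUy]] := U_sep sdense nxy.
apply: hUy.
set n0 := L i.+1.
have [hn0 hst] := R_exists HB n0 hx.
set n := mu (st n0 x) in hn0 hst.
have hRx : mu (st n x) = n by rewrite hst.
have hE : Eg T Tinv mu n y = Eg T Tinv mu n x.
  by rewrite -!(PhiE T Tinv mu) hxy.
have hRy : mu (st n y) = n.
  have : tk (Eg T Tinv mu n x) by rewrite /Eg /Ef hRx eqxx.
  rewrite -hE /Eg /Ef; case: ifP => [/eqP //|_]; by case: ifP.
have [rx _] := rank_ok TK TiK XhS HB HF HC n hx.
have [ry _] := rank_ok TK TiK XhS HB HF HC n hy.
have hba : ba n y = ba n x by rewrite -rx -ry hxy.
set z := st n x; set z' := st n y.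
have nz : ~ D z by apply: Xh_nD; apply: XhS.
have nz' : ~ D z' by apply: Xh_nD; apply: XhS.
have [hsg hcd] := mu_decode TK TiK hap sdense nz nz' (etrans hRx (esym hRy)).
set k := stage T Tinv s z in hsg hcd.
have hik : (i < k)%N.
  have := mu_range TK TiK hap sdense nz; rewrite -/k hRx => /andP[_ hlt].
  rewrite ltnNge; apply/negP => hki.
  have := @L_mono k.+1 i.+1 hki; rewrite -/n0.
  lia.
have hag : (ba n x <= G k.+1)%N.
  have [j [jb hj]] := M_gap TK TiK hap sdense k.+1 x.
  apply: leq_trans jb; apply: ba_le.
  have := mu_ge TK TiK hap sdense (Xh_nD (XhS _ hx)) hj.
  have := mu_range TK TiK hap sdense nz; rewrite -/k hRx => /andP[_ hlt].
  lia.
have := bits_decode hcd hag hik.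
have -> : sh (Posz (ba n x)) z = x by rewrite /z /st shA4 addrN.
have -> : sh (Posz (ba n x)) z' = y by rewrite /z' /st -hba shA4 addrN.
by case=> h _; apply: h.
Qed.

Lemma main_good :
  borel_set Xh /\
  metrically_universal (R := R) T Xh /\
  (forall x, Xh x -> Xh (T x)) /\
  (forall B, UA_borel_set B -> borel_set (Xh `&` Phi @^-1` B)) /\
  (forall x y, Xh x -> Xh y -> Phi x = Phi y -> x = y) /\
  (forall x, Xh x -> adic_shift_defined (Phi x)) /\
  (forall x, Xh x -> adic_shift_graph (Phi x) (Phi (T x))).
Proof.
have hXh : borel_set Xh by apply: Xh_borel.
split => //; split.
  move=> P hP.
  exact: (Xg_P1 TK TiK bT bTi hP (D_borel bT bTi s) (D_sep TK TiK hap sdense)).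
split; first by move=> x hx; apply: (XhS 1).
split; first by move=> B hB; exact: (@meas_Phi _ T Tinv bT bTi _ (meas_mu bT bTi s) Xh hXh B hB).
split; first exact: Phi_inj.
split; first by move=> x hx; apply: (shift_ok' TK TiK XhS HB HF HC hx).
by move=> x hx; apply: (shift_ok TK TiK XhS HB HF HC hx).
Qed.

End Final.

Theorem theorem1 (R : realType) (X : metricType R)
    (hsep : separable_space X) (T : X -> X)
    (hT : borel_automorphism T) (hap : aperiodic T) :
  exists (Xh : set X) (Phi : X -> UApath),
    borel_set Xh /\
    metrically_universal (R := R) T Xh /\
    (forall x, Xh x -> Xh (T x)) /\
    (forall B, UA_borel_set B -> borel_set (Xh `&` Phi @^-1` B)) /\
    (forall x y, Xh x -> Xh y -> Phi x = Phi y -> x = y) /\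
    (forall x, Xh x -> adic_shift_defined (Phi x)) /\
    (forall x, Xh x -> adic_shift_graph (Phi x) (Phi (T x))).
Proof.
case: hT => bT [Tinv [TK TiK bTi]].
have hap' : forall x (n : nat), (0 < n)%N -> iter n T x <> x.
  move=> x n n0 hx.
  have : periodic_points T x by exists n.
  by rewrite hap.
case: (pselect (exists x0 : X, True)) => [[x0 _]|hne]; last first.
  exists set0, (fun x => False_rect _ (hne (ex_intro _ x I))).
  split; first exact: bset0.
  split.
    move=> P [[hP0 _ _ hP1] _ _].
    have : (@setT X) = set0 by apply/seteqP; split => x // _; apply: hne; exists x.
    by move=> e; rewrite -e.
  split; first by move=> x [].
  split; first by move=> B _; rewrite set0I; exact: bset0.
  split; first by move=> x y [].
  by split => x [].

case: hsep => S [cS dS].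
have [f hf] := countable_injP _ cS.
pose s := fun k : nat => match pselect (exists x, S x /\ f x = k) with
  | left h => proj1_sig (cid h) | right _ => x0 end.
have sdense : forall (x : X) (e : R), (0 < e)%R -> exists i, (mdist x (s i) < e)%R.
  move=> x e e0.
  have [y [hy1 hy2]] : [set y | (mdist x y < e)%R] `&` S !=set0.
    apply: dS; last exact: mball_open.
    by exists x => /=; rewrite mdistxx.
  exists (f y); rewrite /s; case: pselect => [h|h]; last first.
    by exfalso; apply: h; exists y.
  case: (cid h) => x' [hx'1 hx'2] /=.
  by rewrite (hf x' y) // inE.
have := main_good TK TiK bT bTi hap' sdense.
move=> H; eexists; eexists; exact: H.
Qed.
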